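(* Let $\psi$ be a CNF formula with only positive literals, with clauses $C_1,\dots,C_m$ each consisting of three distinct variables, and variables $x_1,\dots,x_p$, in which every variable appears in at least $3$ clauses. Let $G$ be the graph constructed as follows: (1) for each variable $x_i$ create a cycle $D_i$ whose number of vertices equals the number of clauses containing $x_i$, and, for each clause containing $x_i$, designate a distinct vertex of $D_i$ as corresponding to that clause; (2) add a vertex $a$ adjacent to every vertex of all cycles $D_1,\dots,D_p$; (3) subdivide every edge of the cycles and every edge incident to $a$ exactly twice (replacing it by a path with three edges); (4) for each clause $C_i=\{x_j,x_k,x_\ell\}$ add a triangle on new vertices $u_{ij},u_{ik},u_{i\ell}$ and make $u_{ij}$ adjacent to the vertex of $D_j$ corresponding to $C_i$, $u_{ik}$ adjacent to the vertex of $D_k$ corresponding to $C_i$, and $u_{i\ell}$ adjacent to the vertex of $D_\ell$ corresponding to $C_i$. If $\psi$ has an assignment in which every clause contains exactly one true variable, then $G$ has a $1$-shallow topological minor of density $\frac{5m}{2m+1}$.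
   Context: A graph $H$ is a $1$-shallow topological minor of $G$ if some graph obtained from $H$ by subdividing each edge at most twice is isomorphic to a subgraph of $G$. The density of $H$ is $\|H\|/|H|$ (number of edges divided by number of vertices). *)

(* Defs.v *)
From mathcomp Require Import all_boot all_order all_algebra.
Set Implicit Arguments. Unset Strict Implicit. Unset Printing Implicit Defensive.
Import Order.TTheory GRing.Theory Num.Theory.

(* Graphs: a (simple) graph is a symmetric irreflexive relation on a   *)
(* finite vertex type.                                                 *)

Definition nedges (V : finType) (e : rel V) : nat :=
  #|[set E : {set V} | [exists x, exists y,
       [&& x != y, e x y & E == [set x; y]]]]|.

Definition density (V : finType) (e : rel V) : rat :=
  ((nedges e)%:R / (#|V|)%:R)%R.

(* H is a 1-shallow topological minor of G: some graph obtained from H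
   by subdividing each edge at most twice is isomorphic to a subgraph
   of G. *)
Definition shallow1_topminor (V W : finType) (eH : rel V) (eG : rel W) : Prop :=
  exists (f : V -> W) (P : V -> V -> seq W),
    [/\ injective f,
        (forall u v, eH u v ->
           [/\ size (P u v) <= 2, P v u = rev (P u v),
               path eG (f u) (rcons (P u v) (f v)),
               uniq (P u v) & all (fun w => w \notin codom f) (P u v)]) &
        (forall u v u' v', eH u v -> eH u' v' ->
           [set u; v] != [set u'; v'] -> [disjoint P u v & P u' v'])].

(* Positive CNF formula: m clauses over p variables; clause i is the   *)
(* set of variables c i.                                               *)

Definition deg (p m : nat) (c : 'I_m -> {set 'I_p}) (j : 'I_p) : nat :=
  #|[set i | j \in c i]|.

(* incidences (variable j, clause i) with x_j in C_i; these index the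
   vertices of the cycles D_j (vertex of D_j corresponding to C_i) *)
Definition Inc (p m : nat) (c : 'I_m -> {set 'I_p}) : finType :=
  {x : 'I_p * 'I_m | x.1 \in c x.2}.

(* pos j : the position (0 .. deg j - 1) along the cycle D_j of the
   vertex corresponding to each clause containing x_j; this encodes an
   arbitrary choice of the cycle D_j and of its designated vertices. *)
Definition cycle_order (p m : nat) (c : 'I_m -> {set 'I_p})
    (pos : 'I_p -> 'I_m -> nat) : Prop :=
  forall j, {in [set i | j \in c i] &, injective (pos j)} /\
            (forall i, j \in c i -> pos j i < deg c j).

Definition nextc (p m : nat) (c : 'I_m -> {set 'I_p})
    (pos : 'I_p -> 'I_m -> nat) (v w : Inc c) : bool :=
  ((val v).1 == (val w).1) &&
  (pos (val v).1 (val w).2 == (pos (val v).1 (val v).2).+1 %% deg c (val v).1).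

(* Vertices of G:
     None                       : the vertex a
     Some (inl (inl (inl v)))   : cycle vertex v of D_j
     Some (inl (inl (inr (v,k)))): k-th subdivision vertex of the cycle
                                   edge from v to its successor
     Some (inl (inr (v,k)))     : k-th subdivision vertex of edge a--v
     Some (inr v)               : triangle vertex u_{ij} for v = (j,i) *)
Definition gvert (p m : nat) (c : 'I_m -> {set 'I_p}) : finType :=
  option (((Inc c + (Inc c * 'I_2)) + (Inc c * 'I_2)) + Inc c)%type.

Definition gedge0 (p m : nat) (c : 'I_m -> {set 'I_p})
    (pos : 'I_p -> 'I_m -> nat) (x y : gvert c) : bool :=
  match x, y with
  | None, Some (inl (inr (_, k))) => val k == 0
  | Some (inl (inr (v, k))), Some (inl (inr (w, l))) =>
      [&& v == w, val k == 0 & val l == 1]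
  | Some (inl (inr (v, k))), Some (inl (inl (inl w))) =>
      (v == w) && (val k == 1)
  | Some (inl (inl (inl v))), Some (inl (inl (inr (w, k)))) =>
      (v == w) && (val k == 0)
  | Some (inl (inl (inr (v, k)))), Some (inl (inl (inr (w, l)))) =>
      [&& v == w, val k == 0 & val l == 1]
  | Some (inl (inl (inr (v, k)))), Some (inl (inl (inl w))) =>
      (val k == 1) && nextc pos v w
  | Some (inr v), Some (inr w) => (v != w) && ((val v).2 == (val w).2)
  | Some (inr v), Some (inl (inl (inl w))) => v == w
  | _, _ => false
  end.

Definition gadj (p m : nat) (c : 'I_m -> {set 'I_p})
    (pos : 'I_p -> 'I_m -> nat) : rel (gvert c) :=
  fun x y => gedge0 pos x y || gedge0 pos y x.
Arguments gadj {p m} c pos.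
Arguments deg {p m} c j.

(* Main.v *)
Require Import Defs.
From mathcomp Require Import all_boot all_order all_algebra.
From mathcomp Require Import zify.
Set Implicit Arguments. Unset Strict Implicit. Unset Printing Implicit Defensive.

Lemma set2_eq (T : finType) (a b a' b' : T) :
  [set a; b] = [set a'; b'] -> (a = a' /\ b = b') \/ (a = b' /\ b = a').
Proof.
move=> E.
have ha : a \in [set a'; b'] by rewrite -E !inE eqxx.
have hb : b \in [set a'; b'] by rewrite -E !inE eqxx orbT.
have ha' : a' \in [set a; b] by rewrite E !inE eqxx.
have hb' : b' \in [set a; b] by rewrite E !inE eqxx orbT.
move: ha hb ha' hb'; rewrite !inE => /orP[]/eqP ha /orP[]/eqP hb /orP[]/eqP ha' /orP[]/eqP hb'; subst; auto.
Qed.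

Section Constr.
Variables (p m : nat) (c : 'I_m -> {set 'I_p}) (pos : 'I_p -> 'I_m -> nat).
Hypothesis Hc3 : forall i, #|c i| = 3.
Hypothesis Hdeg : forall j, 3 <= deg c j.
Hypothesis Hco : cycle_order c pos.
Variable sigma : 'I_p -> bool.
Hypothesis Hsig : forall i, #|[set x in c i | sigma x]| = 1.

Definition Fs i := [set x in c i | ~~ sigma x].

Lemma card_Fs i : #|Fs i| = 2.
Proof.
have := cardsID [set x | sigma x] (c i).
rewrite Hc3.
have -> : c i :&: [set x | sigma x] = [set x in c i | sigma x].
  by apply/setP=> x; rewrite !inE.
have -> : c i :\: [set x | sigma x] = Fs i.
  by apply/setP=> x; rewrite !inE andbC.
by rewrite Hsig => [[]].
Qed.

Definition f (i : 'I_m) (b : 'I_2) : 'I_p := enum_val (cast_ord (esym (card_Fs i)) b).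

Lemma f_Fs i b : f i b \in Fs i.
Proof. exact: enum_valP. Qed.

Lemma f_inj i : injective (f i).
Proof. by move=> b b' /enum_val_inj /(can_inj (@cast_ordK _ _ _)). Qed.

Lemma f_surj i x : x \in Fs i -> exists b, f i b = x.
Proof.
move=> Hx; exists (cast_ord (card_Fs i) (enum_rank_in Hx x)).
by rewrite /f cast_ordK enum_rankK_in.
Qed.

Definition vv := ('I_m * 'I_2)%type.
Definition var (v : vv) := f v.1 v.2.

Lemma var_in v : var v \in c v.1.
Proof. by have := f_Fs v.1 v.2; rewrite inE => /andP[]. Qed.
Lemma var_false v : ~~ sigma (var v).
Proof. by have := f_Fs v.1 v.2; rewrite inE => /andP[]. Qed.

Definition inc (v : vv) : Inc c := Sub (var v, v.1) (var_in v).

Lemma inj_vc v w : var v = var w -> v.1 = w.1 -> v = w.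
Proof.
case: v w => i b [i' b'] /= + E; rewrite /var /= -E => /f_inj ->.
by rewrite E.
Qed.

Lemma inc_inj : injective inc.
Proof.
move=> v w /(congr1 val) [] E1 E2; exact: inj_vc.
Qed.

Definition cyc (v w : vv) := nextc pos (inc v) (inc w).

Lemma cycE v w : cyc v w = (var v == var w) &&
   (pos (var v) w.1 == (pos (var v) v.1).+1 %% deg c (var v)).
Proof. by []. Qed.

Lemma pos_lt v : pos (var v) v.1 < deg c (var v).
Proof. by have [_ H] := Hco (var v); apply: H; apply: var_in. Qed.

Lemma mod_succ k d : k < d -> k.+1 %% d = (if k.+1 < d then k.+1 else 0).
Proof.
move=> H; case: ltnP => H'; first by rewrite modn_small.
have -> : k.+1 = d by lia.
by rewrite modnn.
Qed.

Lemma cyc_irr v : ~~ cyc v v.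
Proof.
rewrite cycE eqxx /=; have := pos_lt v; have := Hdeg (var v).
set d := deg c _; set k := pos _ _ => H1 H2.
rewrite mod_succ //; case: ltnP => ?; lia.
Qed.

Lemma cyc_antisym v w : cyc v w -> ~~ cyc w v.
Proof.
rewrite !cycE => /andP[/eqP Evw /eqP E1]; apply/negP => /andP[_ /eqP E2].
have := pos_lt v; have := pos_lt w; have := Hdeg (var v).
rewrite -Evw in E2 *.
set d := deg c _ in E1 E2 *.
move: E1 E2; set a := pos _ v.1; set b := pos _ w.1 => E1 E2 H3 Hb Ha.
rewrite mod_succ // in E1; rewrite mod_succ // in E2.
move: E1 E2; case: ltnP => ?; case: ltnP => ?; lia.
Qed.

Lemma cyc_uniq v w w' : cyc v w -> cyc v w' -> w = w'.
Proof.
rewrite !cycE => /andP[/eqP E1 /eqP E2] /andP[/eqP E1' /eqP E2'].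
apply: inj_vc; first by rewrite -E1 -E1'.
have [Hinj _] := Hco (var v).
apply: Hinj; last by rewrite E2 E2'.
  by rewrite inE E1 var_in.
by rewrite inE E1' var_in.
Qed.

Lemma pos_surj j k : k < deg c j -> exists i, j \in c i /\ pos j i = k.
Proof.
move=> Hk.
have [Hinj Hlt] := Hco j.
set S := [set i | j \in c i].
have U : uniq (map (pos j) (enum S)).
  rewrite map_inj_in_uniq ?enum_uniq //.
  by move=> x y; rewrite !mem_enum; apply: Hinj.
have Sub : {subset map (pos j) (enum S) <= iota 0 (deg c j)}.
  move=> x /mapP [i]; rewrite mem_enum inE => Hi ->.
  by rewrite mem_iota add0n Hlt.
have Hsz : size (iota 0 (deg c j)) <= size (map (pos j) (enum S)).
  by rewrite size_iota size_map -cardE.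
have [_ E] := uniq_min_size U Sub Hsz.
have : k \in iota 0 (deg c j) by rewrite mem_iota.
rewrite -E => /mapP [i]; rewrite mem_enum inE => Hi ->.
by exists i.
Qed.

Lemma cyc_ex v : exists w, cyc v w.
Proof.
have Hd := Hdeg (var v).
have Hd0 : 0 < deg c (var v) by lia.
have [i [Hi Hpos]] := pos_surj (ltn_pmod (pos (var v) v.1).+1 Hd0).
have : var v \in Fs i by rewrite inE Hi var_false.
case/f_surj => b Hb.
exists (i, b); rewrite cycE /var /= Hb eqxx /=.
by rewrite Hpos.
Qed.

Definition succ v := odflt v [pick w | cyc v w].

Lemma cyc_succ v : cyc v (succ v).
Proof.
rewrite /succ; case: pickP => [w //|H].
by have [w Hw] := cyc_ex v; rewrite H in Hw.
Qed.

Lemma cyc_succE v w : cyc v w -> w = succ v.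
Proof. move=> H; exact: cyc_uniq H (cyc_succ v). Qed.

Lemma cyc_cl v w : cyc v w -> v.1 != w.1.
Proof.
move=> H; apply/negP => /eqP E.
have : var v = var w by move: H; rewrite cycE => /andP[/eqP].
move/inj_vc/(_ E) => Evw; rewrite Evw in H.
by rewrite (negbTE (cyc_irr w)) in H.
Qed.

Lemma pair2 (v w w' : vv) : v.1 = w.1 -> v.1 = w'.1 -> v != w -> v != w' -> w = w'.
Proof.
case: v w w' => i b [i1 b1] [i2 b2] /= <- <-.
rewrite !xpair_eqE !eqxx /= => H1 H2.
congr (_, _); apply: val_inj.
move: H1 H2; case: b b1 b2 => [x hx] [y hy] [z hz].
rewrite -!(inj_eq val_inj) /=; lia.
Qed.


Definition V := option vv.
Definition eH : rel V := fun x y =>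
  match x, y with
  | None, Some _ => true
  | Some _, None => true
  | Some v, Some w => [|| cyc v w, cyc w v | (v.1 == w.1) && (v != w)]
  | None, None => false
  end.

Lemma eH_sym : symmetric eH.
Proof.
case=> [v|] [w|] //=.
by rewrite orbCA (eq_sym v.1) (eq_sym v).
Qed.

Lemma eH_irr : irreflexive eH.
Proof. by case=> [v|] //; rewrite /eH /= (negbTE (cyc_irr v)) !eqxx. Qed.

Definition o0 : 'I_2 := @Ordinal 2 0 isT.
Definition o1 : 'I_2 := @Ordinal 2 1 isT.

Definition Etype := ((vv + vv) + 'I_m)%type.
Definition g (e : Etype) : {set V} :=
  match e with
  | inl (inl v) => [set None; Some v]
  | inl (inr v) => [set Some v; Some (succ v)]
  | inr i => [set Some (i, o0); Some (i, o1)]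
  end.

Lemma ord2 (b : 'I_2) : b = o0 \/ b = o1.
Proof.
case: b => [[|[|k]] hk]; [left|right|by []]; exact: val_inj.
Qed.

Lemma o01 (i : 'I_m) : (i, o0) != (i, o1).
Proof. by rewrite xpair_eqE eqxx. Qed.

Lemma clause_set (v w : vv) : v.1 = w.1 -> v != w ->
  [set Some v; Some w] = [set Some (v.1, o0); Some (v.1, o1)].
Proof.
case: v => i b /= E H.
case: (ord2 b) => Eb; subst b.
- have -> // : w = (i, o1).
  by apply: (@pair2 (i, o0)) => //=; rewrite o01.
- have -> : w = (i, o0).
    apply: (@pair2 (i, o1)) => //=; by rewrite eq_sym o01.
  by rewrite setUC.
Qed.

Lemma Some_neq (T : eqType) (a b : T) : a != b -> Some a != Some b.
Proof. by move=> H; apply/eqP => -[E]; rewrite E eqxx in H. Qed.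

Lemma succ_neq v : v != succ v.
Proof.
apply/negP => /eqP E; have := cyc_succ v; rewrite -E.
by rewrite (negbTE (cyc_irr v)).
Qed.

Lemma edges_eq :
  [set E : {set V} | [exists x, exists y, [&& x != y, eH x y & E == [set x; y]]]]
  = [set g e | e in [set: Etype]].
Proof.
apply/setP => E; rewrite inE; apply/existsP/imsetP.
- case => x /existsP [y /and3P [Hxy He /eqP ->]].
  move: Hxy He; case: x => [v|]; case: y => [w|] //= Hxy He.
  + case/or3P: He => [H|H|/andP[/eqP H1 H2]].
    * by exists (inl (inr v)) ; rewrite ?in_setT //; rewrite (cyc_succE H).
    * by exists (inl (inr w)) ; rewrite ?in_setT //; rewrite (cyc_succE H) setUC.
    * by exists (inr v.1) ; rewrite ?in_setT //; rewrite clause_set.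
  + by exists (inl (inl v)) ; rewrite ?in_setT //; rewrite setUC.
  + by exists (inl (inl w)); rewrite ?in_setT.
- case => e _ ->; case: e => [[v|v]|i].
  + by exists None; apply/existsP; exists (Some v); rewrite /= eqxx.
  + exists (Some v); apply/existsP; exists (Some (succ v)).
    by rewrite Some_neq ?succ_neq //= cyc_succ eqxx.
  + exists (Some (i, o0)); apply/existsP; exists (Some (i, o1)).
    by rewrite Some_neq ?o01 //= o01 !eqxx !orbT.
Qed.

Lemma g_inj : injective g.
Proof.
move=> [[v|v]|i] [[w|w]|j] /set2_eq [[E1 E2]|[E1 E2]] //;
  try (by case: E2 => ->); try (by case: E1 => ->).
- case: E1 E2 => E1 [] E2.
  have H1 : cyc w v by rewrite E1 cyc_succ.
  have H2 : cyc v w by rewrite -E2 cyc_succ.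
  by have := cyc_antisym H2; rewrite H1.
- by case: E1 E2 => E1 [] E2; have := cyc_cl (cyc_succ v); first [by rewrite E2 E1 /= eqxx | by rewrite E1 E2 /= eqxx].
- by case: E1 E2 => E1 [] E2; have := cyc_cl (cyc_succ v); first [by rewrite E2 E1 /= eqxx | by rewrite E1 E2 /= eqxx].
- by case: E1 E2 => E1 [] E2; have := cyc_cl (cyc_succ w); first [by rewrite -E2 -E1 /= eqxx | by rewrite -E1 -E2 /= eqxx].
- by case: E1 E2 => E1 [] E2; have := cyc_cl (cyc_succ w); first [by rewrite -E2 -E1 /= eqxx | by rewrite -E1 -E2 /= eqxx].
Qed.

Lemma nedges_eH : nedges eH = 5 * m.
Proof.
rewrite /nedges edges_eq card_imset; last exact: g_inj.
rewrite cardsT /Etype !card_sum !card_prod !card_ord; lia.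
Qed.

Lemma density_eH : density eH = ((5 * m)%:R / (2 * m + 1)%:R)%R.
Proof.
rewrite /density nedges_eH /V card_option card_prod !card_ord.
by rewrite addn1 (mulnC 2).
Qed.



Definition FV (x : V) : gvert c :=
  match x with None => None | Some v => Some (inl (inl (inl (inc v)))) end.
Definition SA (w : Inc c) (k : 'I_2) : gvert c := Some (inl (inr (w, k))).
Definition SC (w : Inc c) (k : 'I_2) : gvert c := Some (inl (inl (inr (w, k)))).
Definition U (w : Inc c) : gvert c := Some (inr w).

Definition Pth (x y : V) : seq (gvert c) :=
  match x, y with
  | None, Some v => [:: SA (inc v) o0; SA (inc v) o1]
  | Some v, None => [:: SA (inc v) o1; SA (inc v) o0]
  | Some v, Some w =>
      if cyc v w then [:: SC (inc v) o0; SC (inc v) o1]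
      else if cyc w v then [:: SC (inc w) o1; SC (inc w) o0]
      else [:: U (inc v); U (inc w)]
  | None, None => [::]
  end.

Definition rec (y : gvert c) : {set V} :=
  match y with
  | Some (inl (inr (w, _))) => [set x | if x is Some v then inc v == w else true]
  | Some (inl (inl (inr (w, _)))) =>
      [set x | if x is Some v then (inc v == w) || nextc pos w (inc v) else false]
  | Some (inr w) => [set x | if x is Some v then v.1 == (val w).2 else false]
  | _ => set0
  end.

Lemma cyc_eq v w v' : cyc v w -> cyc v v' = (v' == w).
Proof.
move=> H; apply/idP/eqP => [H'|->] //; exact: cyc_uniq H' H.
Qed.

Lemma Some_eq (T : eqType) (a b : T) : (Some a == Some b) = (a == b).
Proof. exact: (inj_eq (@Some_inj _)). Qed.

Lemma Some_None (T : eqType) (a : T) : (Some a == None) = false.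
Proof. by []. Qed.
Lemma None_Some (T : eqType) (a : T) : (None == Some a) = false.
Proof. by []. Qed.

Lemma rec_ok x y z : eH x y -> z \in Pth x y -> rec z = [set x; y].
Proof.
case: x => [v|]; case: y => [w|] //.
- rewrite /eH /Pth.
  case: ifP => [Hc _|Hc].
    rewrite !inE => /orP[] /eqP ->; apply/setP => -[v'|];
      rewrite !inE /= ?Some_eq ?Some_None ?None_Some ?orbF ?orFb //= -/(cyc _ _) (inj_eq inc_inj) (cyc_eq v' Hc) //.
  case: ifP => [Hc' _|Hc'].
    rewrite !inE => /orP[] /eqP ->; apply/setP => -[v'|];
      rewrite !inE /= ?Some_eq ?Some_None ?None_Some ?orbF ?orFb //= -/(cyc _ _) (inj_eq inc_inj) (cyc_eq v' Hc') orbC //.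
  rewrite /= => /andP[/eqP E Hvw].
  rewrite !inE => /orP[] /eqP ->; apply/setP => -[v'|]; rewrite !inE /= ?Some_eq ?Some_None ?None_Some ?orbF ?orFb //=.
  + apply/eqP/orP => [E'|[]/eqP->] //.
    case: (eqVneq v' v) => [->|Hv']; first by left.
    right; apply/eqP; apply: (@pair2 v) => //; by rewrite eq_sym.
  + rewrite -E. apply/eqP/orP => [E'|[]/eqP->] //.
    case: (eqVneq v' v) => [->|Hv']; first by left.
    right; apply/eqP; apply: (@pair2 v) => //; by rewrite eq_sym.
- move=> _; rewrite !inE => /orP[] /eqP ->; apply/setP => -[v'|];
    rewrite !inE /= ?Some_eq ?Some_None ?None_Some ?orbF ?orFb //= (inj_eq inc_inj) //.
- move=> _; rewrite !inE => /orP[] /eqP ->; apply/setP => -[v'|];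
    rewrite !inE /= ?Some_eq ?Some_None ?None_Some ?orbF ?orFb //= (inj_eq inc_inj) //.
Qed.

Lemma nc_SA w k : SA w k \notin codom FV.
Proof. by apply/codomP => -[[x|] E]. Qed.
Lemma nc_SC w k : SC w k \notin codom FV.
Proof. by apply/codomP => -[[x|] E]. Qed.
Lemma nc_U w : U w \notin codom FV.
Proof. by apply/codomP => -[[x|] E]. Qed.

Lemma SC_neq w : SC w o0 != SC w o1.
Proof. by apply/eqP => -[]. Qed.

Lemma SA_neq w : SA w o0 != SA w o1.
Proof. by apply/eqP => -[]. Qed.

Lemma U_eq w w' : (U w == U w') = (w == w').
Proof. by apply/eqP/eqP => [[]|->]. Qed.

Lemma path_ok x y : eH x y ->
  [/\ size (Pth x y) <= 2, Pth y x = rev (Pth x y),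
      path (gadj c pos) (FV x) (rcons (Pth x y) (FV y)),
      uniq (Pth x y) & all (fun w => w \notin codom FV) (Pth x y)].
Proof.
case: x => [v|]; case: y => [w|] //.
- rewrite /eH /Pth.
  case: (boolP (cyc v w)) => [Hc _|Hc].
    rewrite (negbTE (cyc_antisym Hc)).
    split => //=; rewrite ?nc_SC ?inE ?SC_neq //.
    have Hn : nextc pos (inc v) (inc w) := Hc.
    by rewrite /gadj /SC /= Hn !eqxx.
  case: (boolP (cyc w v)) => [Hc' _|Hc'].
    split => //=; rewrite ?nc_SC ?inE 1?eq_sym ?SC_neq //.
    have Hn : nextc pos (inc w) (inc v) := Hc'.
    by rewrite /gadj /SC /= Hn !eqxx ?orbT.
  rewrite /= => /andP[/eqP E Hvw].
  split => //=; rewrite ?nc_U ?inE ?U_eq ?(inj_eq inc_inj) ?Hvw //.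
  by rewrite /gadj /U /= E !(inj_eq inc_inj) Hvw !eqxx.
- move=> _; split => //=; rewrite ?nc_SA ?inE 1?eq_sym ?SA_neq //.
  by rewrite /gadj /SA /= !eqxx ?orbT.
- move=> _; split => //=; rewrite ?nc_SA ?inE ?SA_neq //.
  by rewrite /gadj /SA /= !eqxx ?orbT.
Qed.

Lemma FV_inj : injective FV.
Proof.
case=> [v|] [w|] // E.
have := congr1 (fun z : gvert c => if z is Some (inl (inl (inl a))) then Some a else None) E.
by move=> /= /Some_inj /inc_inj ->.
Qed.

Lemma main_sec : exists (V : finType) (eH : rel V),
    [/\ symmetric eH, irreflexive eH,
        density eH = ((5 * m)%:R / (2 * m + 1)%:R)%R &
        shallow1_topminor eH (gadj c pos)].
Proof.
exists V, eH; split.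
- exact: eH_sym.
- exact: eH_irr.
- exact: density_eH.
exists FV, Pth; split.
- exact: FV_inj.
- move=> u v H; exact: path_ok.
- move=> u v u' v' H H' Hne.
  rewrite disjoint_has; apply/negP => /hasP [z Hz Hz'].
  move: Hne; rewrite -(rec_ok H' Hz') -(rec_ok H Hz) eqxx //.
Qed.

End Constr.

Theorem lemma4 (p m : nat) (c : 'I_m -> {set 'I_p})
    (pos : 'I_p -> 'I_m -> nat) :
  (forall i, #|c i| = 3) ->
  (forall j, 3 <= deg c j) ->
  cycle_order c pos ->
  (exists sigma : 'I_p -> bool, forall i, #|[set x in c i | sigma x]| = 1) ->
  exists (V : finType) (eH : rel V),
    [/\ symmetric eH, irreflexive eH,
        density eH = ((5 * m)%:R / (2 * m + 1)%:R)%R &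
        shallow1_topminor eH (gadj c pos)].
Proof.
move=> Hc3 Hdeg Hco [sigma Hsig].
exact: (main_sec Hc3 Hdeg Hco Hsig).
Qed.
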